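(* For every integer $r\ge7$ there exists $x\in(0,1)$ with $g_r(x)>x$, where $g_r(x)=\mathbb E_{Z\sim\mathcal N(0,1)}\tanh\big(s_r(x)+\sqrt{s_r(x)}Z\big)$ and $s_r(x)=\frac{1}{2(r-1)}\big((1+x)^{r-1}-(1-x)^{r-1}\big)$. *)

(* Defs.v *)
From Stdlib Require Import Reals.
From Coquelicot Require Import Coquelicot.
Open Scope R_scope.

Definition std_normal_pdf (z : R) : R := exp (- z ^ 2 / 2) / sqrt (2 * PI).

Definition s_r (r : nat) (x : R) : R :=
  ((1 + x) ^ (r - 1) - (1 - x) ^ (r - 1)) / (2 * (INR r - 1)).

(* g_r(x) = E_{Z ~ N(0,1)} tanh(s_r(x) + sqrt(s_r(x)) Z), written as the
   improper Riemann integral over the whole real line against the density. *)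
Definition g_r (r : nat) (x : R) : R :=
  RInt_gen (fun z => tanh (s_r r x + sqrt (s_r r x) * z) * std_normal_pdf z)
           (Rbar_locally m_infty) (Rbar_locally p_infty).

(* Main.v *)
Require Import Defs.
From Stdlib Require Import Reals Lra Psatz.
From Coquelicot Require Import Coquelicot.
Open Scope R_scope.

Definition Cp (t : R) := 1 + t/2 + t^2/24.
Definition Pp (t : R) := (1 - 7*t/80)^4 + 14/100.

Lemma piece a b t : 0 <= a -> a <= t <= b -> b <= 80/7 -> 1 <= Cp a * Pp b -> 1 <= Cp t * Pp t.
Proof.
  intros Ha Ht Hb Hn. unfold Cp, Pp in *.
  assert (HC : 1 + a/2 + a^2/24 <= 1 + t/2 + t^2/24) by nra.
  assert (HP : (1 - 7*b/80)^4 <= (1 - 7*t/80)^4).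
  { apply pow_incr. lra. }
  assert (0 <= (1 - 7*b/80)^4) by (apply pow_le; lra).
  assert (0 <= 1 + a/2 + a^2/24) by nra.
  nra.
Qed.

Lemma polyC t : 0 <= t <= 8 -> 1 <= Cp t * Pp t.
Proof.
  intros Ht.
  destruct (Rle_lt_dec t 2). { unfold Cp, Pp. nra. }
  destruct (Rle_lt_dec t 4). { unfold Cp, Pp. nra. }
  Ltac pc a b := apply (piece a b); [lra|lra|lra|unfold Cp, Pp; simpl; lra].
  destruct (Rle_lt_dec t (17/4)). pc 4 (17/4).
  destruct (Rle_lt_dec t (18/4)). pc (17/4) (18/4).
  destruct (Rle_lt_dec t (19/4)). pc (18/4) (19/4).
  destruct (Rle_lt_dec t (20/4)). pc (19/4) (20/4).
  destruct (Rle_lt_dec t (21/4)). pc (20/4) (21/4).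
  destruct (Rle_lt_dec t (22/4)). pc (21/4) (22/4).
  destruct (Rle_lt_dec t (23/4)). pc (22/4) (23/4).
  destruct (Rle_lt_dec t (24/4)). pc (23/4) (24/4).
  destruct (Rle_lt_dec t (25/4)). pc (24/4) (25/4).
  destruct (Rle_lt_dec t (26/4)). pc (25/4) (26/4).
  destruct (Rle_lt_dec t (27/4)). pc (26/4) (27/4).
  destruct (Rle_lt_dec t (28/4)). pc (27/4) (28/4).
  destruct (Rle_lt_dec t (29/4)). pc (28/4) (29/4).
  destruct (Rle_lt_dec t (30/4)). pc (29/4) (30/4).
  destruct (Rle_lt_dec t (31/4)). pc (30/4) (31/4).
  pc (31/4) 8.
Qed.

Lemma T5_prod a : 0 <= a ->
  (1 + a + a^2/2 + a^3/6 + a^4/24 + a^5/120) * (1 - a + a^2/2 - a^3/6 + a^4/24 - a^5/120) <= 1.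
Proof. intros.
assert (H1: 0 <= a^6) by (apply pow_le; lra).
assert (H2: 0 <= a^8) by (apply pow_le; lra).
assert (H3: 0 <= a^10) by (apply pow_le; lra).
ring_simplify. nra. Qed.

Lemma exp_T5 a : 0 <= a -> 1 + a + a^2/2 + a^3/6 + a^4/24 + a^5/120 <= exp a.
Proof.
  intros Ha. pose proof (exp_ge_taylor a 5 Ha) as H. simpl in H.
  unfold Rdiv in *. simpl. lra.
Qed.

Lemma cosh_lb_pos a : 0 <= a -> Cp (a^2) <= cosh a.
Proof.
  intros Ha. unfold cosh. rewrite exp_Ropp.
  set (T := 1 + a + a^2/2 + a^3/6 + a^4/24 + a^5/120).
  set (Tm := 1 - a + a^2/2 - a^3/6 + a^4/24 - a^5/120).
  assert (HT1 : 1 <= T) by (unfold T; assert (0<=a^2) by nra; assert (0<=a^3) by (apply pow_le;lra);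
     assert (0<=a^4) by (apply pow_le;lra); assert (0<=a^5) by (apply pow_le;lra); lra).
  assert (HE : T <= exp a) by (apply exp_T5; auto).
  assert (Hprod : T * Tm <= 1) by (apply T5_prod; auto).
  assert (H2C : 2 * Cp (a^2) = T + Tm) by (unfold Cp, T, Tm; field).
  assert (HEp : 0 < exp a) by apply exp_pos.
  set (E := exp a) in *.
  assert (HiE : E * / E = 1) by (field; lra).
  assert (HiT : T * / T = 1) by (field; lra).
  assert (0 < / E) by (apply Rinv_0_lt_compat; lra).
  assert (0 < / T) by (apply Rinv_0_lt_compat; lra).
  assert (HTm : Tm <= / T) by nra.
  assert (HEi : / E <= / T) by (apply Rinv_le_contravar; lra).
  assert (Hk : / E * / T <= 1) by nra.
  assert (E + / E >= T + / T) by nra.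
  lra.
Qed.

Lemma cosh_lb y : Cp (y^2) <= cosh y.
Proof.
  destruct (Rle_dec 0 y) as [Hy|Hy].
  - apply cosh_lb_pos; auto.
  - replace (cosh y) with (cosh (- y)) by (unfold cosh; rewrite Ropp_involutive; field).
    replace (y^2) with ((-y)^2) by ring. apply cosh_lb_pos. lra.
Qed.

Lemma sech_bound y : / cosh y <= exp (- (7/20) * y^2) + 14/100.
Proof.
  set (t := y^2).
  assert (Ht : 0 <= t) by (unfold t; nra).
  assert (HC := cosh_lb y). fold t in HC.
  assert (HCp : 1 <= Cp t) by (unfold Cp; nra).
  assert (Hinv : / cosh y <= / Cp t) by (apply Rinv_le_contravar; lra).
  assert (0 < / Cp t) by (apply Rinv_0_lt_compat; lra).
  assert (Hc1 : Cp t * / Cp t = 1) by (field; lra).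
  destruct (Rle_lt_dec t 8) as [H8|H8].
  - assert (He : (1 - 7*t/80)^4 <= exp (- (7/20) * t)).
    { replace (- (7/20) * t) with ((- (7/80) * t) + (- (7/80) * t) + (- (7/80) * t) + (- (7/80) * t)) by lra.
      rewrite !exp_plus.
      assert (Hu : 1 - 7*t/80 <= exp (- (7/80) * t)) by (pose proof (exp_ineq1_le (- (7/80) * t)); lra).
      replace (exp (- (7/80) * t) * exp (- (7/80) * t) * exp (- (7/80) * t) * exp (- (7/80) * t))
        with ((exp (- (7/80) * t))^4) by (simpl; field).
      apply pow_incr. lra. }
    pose proof (polyC t (conj Ht H8)). unfold Pp in *. nra.
  - assert (0 < exp (- (7/20) * t)) by apply exp_pos.
    assert (50/7 <= Cp t) by (unfold Cp; nra).
    nra.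
Qed.

Definition C2 n := n*(n-1)/2.
Definition C3 n := n*(n-1)*(n-2)/6.
Definition C4 n := n*(n-1)*(n-2)*(n-3)/24.
Definition C5 n := n*(n-1)*(n-2)*(n-3)*(n-4)/120.

Lemma binom_lb x m : 0 <= x ->
  let n := INR (m + 6) in
  2 * (n*x + C3 n * x^3 + C5 n * x^5) <= (1+x)^(m+6) - (1-x)^(m+6) /\
  2 * (1 + C2 n * x^2 + C4 n * x^4) <= (1+x)^(m+6) + (1-x)^(m+6).
Proof.
  intros Hx. induction m as [|m IH]; intros n.
  - unfold n. simpl. unfold C2, C3, C4, C5. split.
    + assert (0 <= x^6) by (apply pow_le; lra). field_simplify. nra.
    + assert (0 <= x^6) by (apply pow_le; lra). simpl. field_simplify. nra.
  - simpl in IH. destruct IH as [ID IS].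
    assert (Hn : n = INR (m+6) + 1) by (unfold n; rewrite <- S_INR; f_equal).
    set (k := INR (m+6)) in *.
    assert (Hk : 6 <= k) by (unfold k; rewrite plus_INR; simpl; pose proof (pos_INR m); lra).
    replace (S m + 6)%nat with (S (m+6)) by lia.
    change ((1+x)^(S (m+6))) with ((1+x) * (1+x)^(m+6)).
    change ((1-x)^(S (m+6))) with ((1-x) * (1-x)^(m+6)).
    set (A := (1+x)^(m+6)) in *. set (B := (1-x)^(m+6)) in *.
    assert (HxS : x * (2 * (1 + C2 k * x^2 + C4 k * x^4)) <= x * (A + B)) by (apply Rmult_le_compat_l; lra).
    assert (HxD : x * (2 * (k*x + C3 k * x^3 + C5 k * x^5)) <= x * (A - B)) by (apply Rmult_le_compat_l; lra).
    assert (H5 : 0 <= C5 k * x^6).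
    { unfold C5. apply Rmult_le_pos; [|apply pow_le; lra]. 
      assert (0 <= k*(k-1)*(k-2)*(k-3)*(k-4)).
      { repeat apply Rmult_le_pos; lra. }
      lra. }
    rewrite Hn. unfold C2, C3, C4, C5 in *. split.
    + field_simplify. field_simplify in HxS. field_simplify in ID. lra.
    + field_simplify. field_simplify in HxD. field_simplify in IS. field_simplify in H5. lra.
Qed.

Lemma s_lb r : (7 <= r)%nat -> 283/100 <= s_r r (4/5).
Proof.
  intros Hr. destruct (Nat.le_exists_sub 7 r Hr) as [m [Hm _]]. subst r.
  unfold s_r.
  replace (m + 7 - 1)%nat with (m + 6)%nat by lia.
  replace (INR (m + 7) - 1) with (INR (m+6)) by (rewrite !plus_INR; simpl; lra).
  destruct (binom_lb (4/5) m ltac:(lra)) as [HD _]. simpl in HD.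
  set (k := INR (m+6)) in *.
  assert (Hk : 6 <= k) by (unfold k; rewrite plus_INR; simpl; pose proof (pos_INR m); lra).
  apply Rmult_le_reg_r with (2 * k). lra.
  match goal with |- _ <= ?D / _ * _ => replace (D / (2*k) * (2*k)) with D by (field; lra) end.
  eapply Rle_trans; [|exact HD].
  unfold C3, C5.
  assert (0 <= (k-6)*(k-6)) by nra.
  assert (0 <= (k-6)*(k-6)*(k-6)) by (apply Rmult_le_pos; lra).
  assert (0 <= (k-6)*(k-6)*(k-6)*(k-6)) by (apply Rmult_le_pos; lra).
  assert (0 <= (k-6)*(k-6)*(k-6)*(k-6)*(k-6)) by (apply Rmult_le_pos; lra).
  nra.
Qed.

Lemma exp_half_lb s : 0 <= s -> (1 + s/16)^8 <= exp (s/2).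
Proof.
  intros Hs.
  replace (s/2) with (s/16+s/16+s/16+s/16+s/16+s/16+s/16+s/16) by field.
  rewrite !exp_plus.
  assert (Hu : 1 + s/16 <= exp (s/16)) by apply exp_ineq1_le.
  replace (exp (s/16) * exp (s/16) * exp (s/16) * exp (s/16) * exp (s/16) * exp (s/16) * exp (s/16) * exp (s/16))
    with ((exp (s/16))^8) by (simpl; field).
  apply pow_incr. lra.
Qed.

Lemma final_num s : 283/100 <= s ->
  4/5 < 1 - exp (- s / 2) * (14/100 + / sqrt (1 + 2 * (7/20) * s)).
Proof.
  intros Hs.
  assert (HE := exp_half_lb s ltac:(lra)).
  assert (HE2 : (1 + 283/100/16)^8 <= (1 + s/16)^8) by (apply pow_incr; lra).
  assert (HE4 : 367/100 <= (1 + 283/100/16)^8) by (simpl; lra).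
  assert (HE3 : 367/100 <= exp (s/2)) by lra.
  assert (Hq : 172/100 <= sqrt (1 + 2 * (7/20) * s)).
  { rewrite <- (sqrt_pow2 (172/100)) by lra. apply sqrt_le_1_alt. simpl. lra. }
  assert (Hq2 : / sqrt (1 + 2 * (7/20) * s) <= / (172/100)) by (apply Rinv_le_contravar; lra).
  assert (Hq3 : 0 < / sqrt (1 + 2 * (7/20) * s)) by (apply Rinv_0_lt_compat; lra).
  replace (exp (- s / 2)) with (/ exp (s/2)) by (rewrite <- exp_Ropp; f_equal; field).
  assert (0 < / exp (s/2)) by (apply Rinv_0_lt_compat; apply exp_pos).
  assert (/ exp (s/2) <= / (367/100)) by (apply Rinv_le_contravar; lra).
  assert (/ exp (s/2) * (14/100 + / sqrt (1 + 2 * (7/20) * s)) <= / (367/100) * (14/100 + / (172/100))).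
  { apply Rmult_le_compat; lra. }
  replace (/ (367/100) * (14/100 + / (172/100))) with (100/367 * (14/100 + 100/172)) in * by field.
  lra.
Qed.


Definition Glim (f : R -> R) (l : R) :=
  forall eps : R, 0 < eps -> exists M, forall a b, a < -M -> M < b -> Rabs (RInt f a b - l) < eps.

Lemma exRI (f : R -> R) a b : (forall z, continuous f z) -> ex_RInt f a b.
Proof. intros H. apply (@ex_RInt_continuous R_CompleteNormedModule). intros; apply H. Qed.

Lemma Glim_is_RInt_gen (f : R -> R) l : (forall z, continuous f z) -> Glim f l ->
  is_RInt_gen f (Rbar_locally m_infty) (Rbar_locally p_infty) l.
Proof.
  intros Hc Hg P [eps HP].
  destruct (Hg eps (cond_pos eps)) as [M HM].
  apply Filter_prod with (fun a => a < -M) (fun b => M < b).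
  - exists (-M). auto.
  - exists M. auto.
  - intros a b Ha Hb. exists (RInt f a b). split.
    + apply (@RInt_correct R_CompleteNormedModule). apply exRI; auto.
    + apply HP. apply HM; auto.
Qed.

Lemma RInt_sub (f : R -> R) a b c : (forall z, continuous f z) ->
  RInt f a c - RInt f a b = RInt f b c.
Proof.
  intros Hc. rewrite <- (RInt_Chasles f a b c) by (apply exRI; auto).
  unfold plus; simpl. ring.
Qed.

Lemma RInt_swap' (f : R -> R) a b : (forall z, continuous f z) -> RInt f b a = - RInt f a b.
Proof.
  intros Hc. rewrite <- (opp_RInt_swap f a b) by (apply exRI; auto). reflexivity.
Qed.

Lemma cont_R (f : R -> R) x : ex_derive f x -> continuous f x.
Proof. intros H. exact (@ex_derive_continuous R_AbsRing R_NormedModule f x H). Qed.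

Lemma exp_mono a b : a <= b -> exp a <= exp b.
Proof. intros H. destruct (Rle_lt_or_eq_dec _ _ H) as [h|h]. apply Rlt_le, exp_increasing; auto. subst; lra. Qed.

Lemma RInt_exp_neg u v : RInt (fun t => exp (- t)) u v = exp (- u) - exp (- v).
Proof.
  apply is_RInt_unique.
  replace (exp (- u) - exp (- v)) with (minus ((fun t => - exp (- t)) v) ((fun t => - exp (- t)) u))
    by (unfold minus, plus, opp; simpl; ring).
  apply (@is_RInt_derive R_CompleteNormedModule (fun t => - exp (- t)) (fun t => exp (- t))).
  - intros x _. auto_derive; auto. ring.
  - intros x _. apply cont_R. auto_derive. auto.
Qed.

Lemma RInt_exp_pos u v : RInt (fun t => exp t) u v = exp v - exp u.
Proof.
  apply is_RInt_unique.
  replace (exp v - exp u) with (minus ((fun t => exp t) v) ((fun t => exp t) u))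
    by (unfold minus, plus, opp; simpl; ring).
  apply (@is_RInt_derive R_CompleteNormedModule (fun t => exp t) (fun t => exp t)).
  - intros x _. auto_derive; auto. ring.
  - intros x _. apply cont_R. auto_derive. auto.
Qed.

Lemma tail_r (f : R -> R) C B u v : (forall z, continuous f z) -> (forall z, Rabs (f z) <= C * exp (- Rabs z)) ->
  0 <= B -> B <= u -> B <= v -> Rabs (RInt f u v) <= C * exp (- B).
Proof.
  intros Hc Hb HB.
  assert (HC : 0 <= C).
  { specialize (Hb 0). pose proof (Rabs_pos (f 0)). pose proof (exp_pos (- Rabs 0)). nra. }
  assert (key : forall u v, B <= u <= v -> Rabs (RInt f u v) <= C * exp (- B)).
  { intros u0 v0 [H1 H2].
    eapply Rle_trans. apply abs_RInt_le; auto. apply exRI; auto.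
    eapply Rle_trans. apply RInt_le with (g := fun t => C * exp (- t)); auto.
    - apply exRI. intros; apply continuous_comp; auto. apply continuous_Rabs.
    - apply exRI. intros. apply cont_R. auto_derive. auto.
    - intros x Hx. rewrite <- (Rabs_pos_eq x) at 2 by lra. apply Hb.
    - replace (RInt (fun t => C * exp (- t)) u0 v0) with (scal C (RInt (fun t => exp (- t)) u0 v0)).
      2:{ rewrite <- RInt_scal. reflexivity. apply exRI. intros. apply cont_R. auto_derive. auto. }
      rewrite RInt_exp_neg. unfold scal; simpl; unfold mult; simpl.
      assert (exp (- u0) <= exp (- B)) by (apply exp_mono; lra).
      pose proof (exp_pos (- v0)). nra. }
  intros Hu Hv. destruct (Rle_dec u v).
  - apply key; lra.
  - rewrite RInt_swap' by auto. rewrite Rabs_Ropp. apply key; lra.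
Qed.

Lemma tail_l (f : R -> R) C B u v : (forall z, continuous f z) -> (forall z, Rabs (f z) <= C * exp (- Rabs z)) ->
  0 <= B -> u <= -B -> v <= -B -> Rabs (RInt f u v) <= C * exp (- B).
Proof.
  intros Hc Hb HB.
  assert (HC : 0 <= C).
  { specialize (Hb 0). pose proof (Rabs_pos (f 0)). pose proof (exp_pos (- Rabs 0)). nra. }
  assert (key : forall u v, u <= v <= -B -> Rabs (RInt f u v) <= C * exp (- B)).
  { intros u0 v0 [H1 H2].
    eapply Rle_trans. apply abs_RInt_le; auto. apply exRI; auto.
    eapply Rle_trans. apply RInt_le with (g := fun t => C * exp t); auto.
    - apply exRI. intros; apply continuous_comp; auto. apply continuous_Rabs.
    - apply exRI. intros. apply cont_R. auto_derive. auto.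
    - intros x Hx. replace x with (- Rabs x) at 2 by (rewrite Rabs_left by lra; ring). apply Hb.
    - replace (RInt (fun t => C * exp t) u0 v0) with (scal C (RInt (fun t => exp t) u0 v0)).
      2:{ rewrite <- RInt_scal. reflexivity. apply exRI. intros. apply cont_R. auto_derive. auto. }
      rewrite RInt_exp_pos. unfold scal; simpl; unfold mult; simpl.
      assert (exp v0 <= exp (- B)) by (apply exp_mono; lra).
      pose proof (exp_pos u0). nra. }
  intros Hu Hv. destruct (Rle_dec u v).
  - apply key; lra.
  - rewrite RInt_swap' by auto. rewrite Rabs_Ropp. apply key; lra.
Qed.

Lemma exp_small eps : 0 < eps -> exists B, 0 <= B /\ exp (- B) < eps.
Proof.
  intros He. exists (/ eps). split. apply Rlt_le, Rinv_0_lt_compat; auto.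
  rewrite exp_Ropp. pose proof (exp_ineq1_le (/ eps)).
  assert (0 < / eps) by (apply Rinv_0_lt_compat; auto).
  assert (Hl : / eps < exp (/ eps)) by lra.
  apply (Rinv_lt_contravar (/ eps)) in Hl. rewrite Rinv_inv in Hl. exact Hl. nra.
Qed.

Lemma Glim_exists (f : R -> R) C : (forall z, continuous f z) -> (forall z, Rabs (f z) <= C * exp (- Rabs z)) ->
  exists l, Glim f l.
Proof.
  intros Hc Hb.
  assert (HC : 0 <= C).
  { specialize (Hb 0). pose proof (Rabs_pos (f 0)). pose proof (exp_pos (- Rabs 0)). nra. }
  set (F := filter_prod (Rbar_locally m_infty) (Rbar_locally p_infty)).
  assert (HF : ProperFilter F) by (apply filter_prod_proper; apply Rbar_locally_filter).
  destruct (proj1 (@filterlim_locally_cauchy (R*R) R_CompleteSpace F HF (fun ab => RInt f (fst ab) (snd ab)))) as [y Hy].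
  - intros eps.
    destruct (exp_small (eps / (2 * (C + 1)))) as [B [HB0 HB]].
    { apply Rdiv_lt_0_compat. apply cond_pos. lra. }
    exists (fun ab => fst ab < -B /\ B < snd ab). split.
    + apply Filter_prod with (fun a => a < -B) (fun b => B < b).
      * exists (-B). auto.
      * exists B. auto.
      * intros a b Ha Hb'. simpl. auto.
    + intros [a b] [a' b'] [Ha Hb1] [Ha' Hb1']. simpl in *.
      change (Rabs (RInt f a' b' - RInt f a b) < eps).
      replace (RInt f a' b' - RInt f a b) with (RInt f a' a + RInt f b b').
      2:{ pose proof (RInt_sub f a' a b' Hc). pose proof (RInt_sub f a b b' Hc). lra. }
      pose proof (tail_l f C B a' a Hc Hb HB0 ltac:(lra) ltac:(lra)).
      pose proof (tail_r f C B b b' Hc Hb HB0 ltac:(lra) ltac:(lra)).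
      eapply Rle_lt_trans. apply Rabs_triang.
      assert (C * exp (- B) < eps / 2).
      { assert (Hp := exp_pos (- B)).
        apply Rmult_lt_compat_l with (r := C + 1) in HB; [|lra].
        replace ((C+1) * (eps / (2 * (C + 1)))) with (eps/2) in HB by (field; lra). nra. }
      lra.
  - exists y. intros eps Heps.
    assert (Hl : locally y (ball y (mkposreal eps Heps))) by (apply locally_ball).
    specialize (Hy _ Hl). destruct Hy as [Q R HQ HR HQR].
    destruct HQ as [M1 HM1]. destruct HR as [M2 HM2].
    exists (Rmax (- M1) M2). intros a b Ha Hb'.
    apply (HQR a b).
    + apply HM1. pose proof (Rmax_l (-M1) M2). lra.
    + apply HM2. pose proof (Rmax_r (-M1) M2). lra.
Qed.

Lemma RInt_plus' (f g : R -> R) a b : (forall z, continuous f z) -> (forall z, continuous g z) ->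
  RInt (fun x => f x + g x) a b = RInt f a b + RInt g a b.
Proof. intros Hf Hg. exact (@RInt_plus R_CompleteNormedModule f g a b (exRI f a b Hf) (exRI g a b Hg)). Qed.

Lemma RInt_scal' (f : R -> R) c a b : (forall z, continuous f z) ->
  RInt (fun x => c * f x) a b = c * RInt f a b.
Proof. intros Hf. exact (@RInt_scal R_CompleteNormedModule f a b c (exRI f a b Hf)). Qed.

Lemma Glim_plus (f g : R -> R) lf lg : (forall z, continuous f z) -> (forall z, continuous g z) ->
  Glim f lf -> Glim g lg -> Glim (fun x => f x + g x) (lf + lg).
Proof.
  intros Hf Hg Gf Gg eps He.
  destruct (Gf (eps/2) ltac:(lra)) as [M1 H1]. destruct (Gg (eps/2) ltac:(lra)) as [M2 H2].
  exists (Rmax M1 M2). intros a b Ha Hb. rewrite RInt_plus' by auto.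
  pose proof (Rmax_l M1 M2). pose proof (Rmax_r M1 M2).
  specialize (H1 a b ltac:(lra) ltac:(lra)). specialize (H2 a b ltac:(lra) ltac:(lra)).
  replace (RInt f a b + RInt g a b - (lf + lg)) with ((RInt f a b - lf) + (RInt g a b - lg)) by ring.
  eapply Rle_lt_trans. apply Rabs_triang. lra.
Qed.

Lemma Glim_scal (f : R -> R) c l : (forall z, continuous f z) ->
  Glim f l -> Glim (fun x => c * f x) (c * l).
Proof.
  intros Hf Gf eps He.
  destruct (Gf (eps / (Rabs c + 1))) as [M HM].
  { apply Rdiv_lt_0_compat; auto. pose proof (Rabs_pos c). lra. }
  exists M. intros a b Ha Hb. rewrite RInt_scal' by auto.
  specialize (HM a b Ha Hb).
  replace (c * RInt f a b - c * l) with (c * (RInt f a b - l)) by ring.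
  rewrite Rabs_mult.
  pose proof (Rabs_pos c). pose proof (Rabs_pos (RInt f a b - l)).
  apply Rmult_lt_compat_l with (r := Rabs c + 1) in HM; [|lra].
  replace ((Rabs c + 1) * (eps / (Rabs c + 1))) with eps in HM by (field; lra).
  nra.
Qed.

Lemma Glim_ext (f g : R -> R) l : (forall z, f z = g z) -> Glim f l -> Glim g l.
Proof.
  intros He Gf eps Heps. destruct (Gf eps Heps) as [M HM]. exists M. intros a b Ha Hb.
  rewrite <- (RInt_ext f g) by (intros; apply He). auto.
Qed.

Lemma Glim_le (f h : R -> R) lf lh : (forall z, continuous f z) -> (forall z, continuous h z) ->
  (forall z, h z <= f z) -> Glim f lf -> Glim h lh -> lh <= lf.
Proof.
  intros Hf Hh Hle Gf Gh.
  destruct (Rle_dec lh lf) as [|Hn]; auto. exfalso.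
  set (e := (lh - lf) / 2).
  destruct (Gf e ltac:(unfold e; lra)) as [M1 H1]. destruct (Gh e ltac:(unfold e; lra)) as [M2 H2].
  set (M := Rabs M1 + Rabs M2 + 1).
  pose proof (Rle_abs M1). pose proof (Rle_abs M2). pose proof (Rabs_pos M1). pose proof (Rabs_pos M2).
  specialize (H1 (-M-1) (M+1) ltac:(unfold M; lra) ltac:(unfold M; lra)).
  specialize (H2 (-M-1) (M+1) ltac:(unfold M; lra) ltac:(unfold M; lra)).
  assert (RInt h (-M-1) (M+1) <= RInt f (-M-1) (M+1)).
  { apply RInt_le. pose proof (Rabs_pos M1); pose proof (Rabs_pos M2); unfold M; lra.
    apply exRI; auto. apply exRI; auto. intros; auto. }
  apply Rabs_def2 in H1. apply Rabs_def2 in H2. unfold e in *. lra.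
Qed.

Definition gf (x : R) := exp (- x^2).
Definition J (t : R) := RInt gf 0 t.
Definition pf (u x : R) := exp (- (u^2 * (1 + x^2))) / (1 + x^2).
Definition Gp (t : R) := RInt (fun x => pf t x) 0 1.

Lemma gf_cont z : continuous gf z.
Proof. apply cont_R. unfold gf. auto_derive. auto. Qed.

Lemma J_derive t : is_derive J t (gf t).
Proof.
  apply (@is_derive_RInt R_NormedModule gf J 0 t).
  - apply filter_forall. intros b. unfold J. apply (@RInt_correct R_CompleteNormedModule). apply exRI. apply gf_cont.
  - apply gf_cont.
Qed.

Lemma pf_derive u x : is_derive (fun z => pf z x) u (- 2 * u * exp (- (u^2 * (1 + x^2)))).
Proof.
  unfold pf. auto_derive.
  - assert (0 < 1 + x^2) by nra. lra.
  - replace (u * (u * 1) * (1 + x * (x * 1))) with (u^2 * (1+x^2)) by ring.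
    field. assert (0 < 1 + x^2) by nra. lra.
Qed.

Lemma pf_cont u x : continuous (fun x => pf u x) x.
Proof. apply cont_R. unfold pf. auto_derive. assert (0 < 1 + x^2) by nra. lra. Qed.

Lemma Gp_derive t : is_derive Gp t (RInt (fun x => - 2 * t * exp (- (t^2 * (1 + x^2)))) 0 1).
Proof.
  assert (HD : forall u x, Derive (fun z => pf z x) u = - 2 * u * exp (- (u^2 * (1 + x^2)))).
  { intros. apply is_derive_unique. apply pf_derive. }
  replace (RInt (fun x => - 2 * t * exp (- (t^2 * (1 + x^2)))) 0 1)
    with (RInt (fun x => Derive (fun u => pf u x) t) 0 1).
  2:{ apply RInt_ext. intros. apply HD. }
  apply (is_derive_RInt_param pf 0 1 t).
  - apply filter_forall. intros y x _. eexists. apply pf_derive.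
  - intros x _. apply continuity_2d_pt_ext with (f := fun u v => - 2 * u * exp (- (u^2 * (1 + v^2)))).
    { intros; symmetry; apply HD. }
    apply continuity_2d_pt_mult.
    + apply continuity_2d_pt_mult. apply continuity_2d_pt_const. apply continuity_2d_pt_id1.
    + apply continuity_1d_2d_pt_comp with (f := exp).
      * apply derivable_continuous_pt, derivable_pt_exp.
      * apply continuity_2d_pt_opp. apply continuity_2d_pt_mult.
        -- simpl. apply continuity_2d_pt_mult. apply continuity_2d_pt_id1.
           apply continuity_2d_pt_mult. apply continuity_2d_pt_id1. apply continuity_2d_pt_const.
        -- apply continuity_2d_pt_plus. apply continuity_2d_pt_const. simpl.
           apply continuity_2d_pt_mult. apply continuity_2d_pt_id2.
           apply continuity_2d_pt_mult. apply continuity_2d_pt_id2. apply continuity_2d_pt_const.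
  - apply filter_forall. intros y. apply exRI. intros; apply pf_cont.
Qed.

Lemma Gp_derive' t : is_derive Gp t (- 2 * exp (- t^2) * J t).
Proof.
  replace (- 2 * exp (- t^2) * J t) with (RInt (fun x => - 2 * t * exp (- (t^2 * (1 + x^2)))) 0 1).
  { apply Gp_derive. }
  unfold J.
  replace (RInt gf 0 t) with (RInt (fun y => scal t (gf (t * y + 0))) 0 1).
  2:{ assert (H := @RInt_comp_lin R_CompleteNormedModule gf t 0 0 1 (exRI _ _ _ gf_cont)).
      rewrite Rmult_0_r, Rplus_0_r, Rmult_1_r, Rplus_0_r in H. exact H. }
  rewrite <- RInt_scal'.
  2:{ intros z. apply cont_R. unfold scal; simpl; unfold mult; simpl; unfold gf. auto_derive. auto. }
  apply RInt_ext. intros x _. unfold scal; simpl; unfold mult; simpl; unfold gf.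
  replace (- (t * (t * 1) * (1 + x * (x * 1)))) with (- (t * (t * 1)) + - (t * x + 0)^2) by ring.
  rewrite exp_plus. ring.
Qed.

Lemma atan_int : RInt (fun x => / (1 + x^2)) 0 1 = PI / 4.
Proof.
  apply is_RInt_unique.
  replace (PI / 4) with (minus (atan 1) (atan 0)).
  2:{ rewrite atan_1, atan_0. unfold minus, plus, opp; simpl. field. }
  apply (@is_RInt_derive R_CompleteNormedModule atan (fun x => / (1 + x^2))).
  - intros x _. assert (H := is_derive_atan x). unfold Rsqr in H. simpl. 
    replace (x * (x * 1)) with (x * x) by ring. exact H.
  - intros x _. apply cont_R. auto_derive. assert (0 < 1 + x^2) by nra. lra.
Qed.

Lemma Hconst t : 0 <= t -> J t * J t + Gp t = PI / 4.
Proof.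
  intros Ht.
  assert (HD : forall s, is_derive (fun x => J x * J x + Gp x) s 0).
  { intros s.
    pose proof (is_derive_plus _ _ s _ _ (is_derive_mult J J s _ _ (J_derive s) (J_derive s) Rmult_comm) (Gp_derive' s)) as D.
    match type of D with is_derive _ _ ?v => assert (E : v = 0) end.
    { unfold plus, mult, gf; simpl. ring. }
    rewrite E in D. exact D. }
  destruct (Rle_lt_or_eq_dec _ _ Ht) as [Hp|He].
  2:{ subst t. unfold J. rewrite RInt_point. unfold zero; simpl.
      unfold Gp, pf. rewrite <- atan_int. rewrite Rmult_0_l, Rplus_0_l. apply RInt_ext. intros x _.
      assert (E0 : - (0^2 * (1 + x^2)) = 0) by (simpl; ring). rewrite E0, exp_0. unfold Rdiv. apply Rmult_1_l. }
  assert (E := eq_is_derive (fun x => J x * J x + Gp x) 0 t (fun s _ => HD s) Hp).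
  simpl in E. rewrite <- E.
  unfold J. rewrite RInt_point. unfold zero; simpl.
  unfold Gp, pf. rewrite <- atan_int. rewrite Rmult_0_l, Rplus_0_l. apply RInt_ext. intros x _.
  assert (E0 : - (0^2 * (1 + x^2)) = 0) by (simpl; ring). rewrite E0, exp_0. unfold Rdiv. apply Rmult_1_l.
Qed.

Lemma pf_cont' u z : continuous (fun x => pf u x) z.
Proof. apply pf_cont. Qed.

Lemma Gp_nonneg t : 0 <= Gp t.
Proof.
  unfold Gp. apply RInt_ge_0. lra. apply exRI. apply pf_cont'.
  intros x _. unfold pf. apply Rmult_le_pos. apply Rlt_le, exp_pos.
  apply Rlt_le, Rinv_0_lt_compat. nra.
Qed.

Lemma Gp_le t : Gp t <= exp (- t^2) * (PI / 4).
Proof.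
  rewrite <- atan_int. rewrite <- RInt_scal'.
  2:{ intros z. apply cont_R. auto_derive. assert (0 < 1 + z^2) by nra. lra. }
  unfold Gp. apply RInt_le. lra. apply exRI, pf_cont'.
  apply exRI. intros z. apply cont_R. auto_derive. assert (0 < 1 + z^2) by nra. lra.
  intros x _. unfold pf, Rdiv.
  apply Rmult_le_compat_r. apply Rlt_le, Rinv_0_lt_compat. nra.
  apply exp_mono. assert (0 <= t^2 * x^2) by (apply Rmult_le_pos; nra). nra.
Qed.

Lemma J_nonneg t : 0 <= t -> 0 <= J t.
Proof.
  intros Ht. unfold J. apply RInt_ge_0; auto. apply exRI, gf_cont.
  intros; unfold gf; apply Rlt_le, exp_pos.
Qed.

Definition cG := sqrt PI / 2.

Lemma cG_pos : 0 < cG.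
Proof. unfold cG. assert (0 < sqrt PI) by (apply sqrt_lt_R0, PI_RGT_0). lra. Qed.

Lemma cG_sq : cG * cG = PI / 4.
Proof. unfold cG. assert (H := sqrt_sqrt PI (Rlt_le _ _ PI_RGT_0)). replace (sqrt PI / 2 * (sqrt PI / 2)) with (sqrt PI * sqrt PI / 4) by field. rewrite H. reflexivity. Qed.

Lemma J_bound t : 0 <= t -> Rabs (J t - cG) <= cG * exp (- t^2).
Proof.
  intros Ht.
  pose proof (Hconst t Ht). pose proof (Gp_nonneg t). pose proof (Gp_le t).
  pose proof (J_nonneg t Ht). pose proof cG_pos. pose proof cG_sq.
  pose proof (exp_pos (- t^2)).
  set (j := J t) in *. set (e := exp (- t^2)) in *.
  assert (Hj : j <= cG) by nra.
  rewrite Rabs_left1 by lra.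
  assert ((cG - j) * (cG + j) <= cG * cG * e) by nra.
  nra.
Qed.

Lemma J_odd t : J (- t) = - J t.
Proof.
  unfold J.
  assert (H := @RInt_comp_lin R_CompleteNormedModule gf (-1) 0 0 t (exRI _ _ _ gf_cont)).
  rewrite Rmult_0_r, Rplus_0_r, Rplus_0_r in H.
  replace (-1 * t) with (- t) in H by ring.
  rewrite <- H.
  replace (- RInt gf 0 t) with (-1 * RInt gf 0 t) by ring.
  rewrite <- RInt_scal'.
  2:{ intros z. apply cont_R. unfold gf. auto_derive. auto. }
  apply RInt_ext. intros x _. unfold scal; simpl; unfold mult; simpl. unfold gf.
  replace ((-1 * x + 0)^2) with (x^2) by ring. reflexivity.
Qed.

Lemma RInt_gf_JJ A B : RInt gf A B = J B - J A.
Proof. unfold J. symmetry. apply RInt_sub. apply gf_cont. Qed.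

Lemma gauss_RInt a c0 p q : 0 < a ->
  RInt (fun z => exp (- (a * (z + c0)^2))) p q = / sqrt a * (J (sqrt a * q + sqrt a * c0) - J (sqrt a * p + sqrt a * c0)).
Proof.
  intros Ha. set (w := sqrt a).
  assert (Hw : 0 < w) by (apply sqrt_lt_R0; auto).
  assert (Hw2 : w * w = a) by (apply sqrt_sqrt; lra).
  assert (H := @RInt_comp_lin R_CompleteNormedModule gf w (w * c0) p q (exRI _ _ _ gf_cont)).
  rewrite <- RInt_gf_JJ. rewrite <- H.
  transitivity (/ w * RInt (fun y => w * exp (- (a * (y + c0)^2))) p q).
  { rewrite RInt_scal'. rewrite <- Rmult_assoc, Rinv_l, Rmult_1_l. reflexivity. lra. intros z. apply cont_R. auto_derive. auto. }
  f_equal. apply RInt_ext. intros x _. unfold scal; simpl; unfold mult; simpl. unfold gf.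
  replace ((w * x + w * c0)^2) with (a * (x + c0)^2). reflexivity.
  rewrite <- Hw2. ring.
Qed.

Lemma exp_sq_le t : 1 <= t -> exp (- t^2) <= exp (- t).
Proof. intros. apply exp_mono. nra. Qed.

Lemma gauss_Glim a c0 : 0 < a -> Glim (fun z => exp (- (a * (z + c0)^2))) (sqrt PI / sqrt a).
Proof.
  intros Ha eps He. set (w := sqrt a).
  assert (Hw : 0 < w) by (apply sqrt_lt_R0; auto).
  pose proof cG_pos as HcG.
  destruct (exp_small (eps * w / (2 * cG))) as [T0 [HT0 HT]].
  { apply Rdiv_lt_0_compat; nra. }
  set (T := T0 + 1).
  assert (HT' : exp (- T) < eps * w / (2 * cG)).
  { eapply Rle_lt_trans; [|exact HT]. apply exp_mono. unfold T; lra. }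
  exists (T / w + Rabs c0 + 1). intros p q Hp Hq.
  rewrite gauss_RInt by auto. fold w.
  pose proof (Rle_abs c0). pose proof (Rle_abs (- c0)). rewrite Rabs_Ropp in *.
  assert (HTw : w * (T / w) = T) by (field; lra).
  assert (HB : T <= w * q + w * c0).
  { assert (T / w < q + c0) by lra. nra. }
  assert (HA : T <= - (w * p + w * c0)).
  { assert (T / w < - (p + c0)) by lra. nra. }
  set (B := w * q + w * c0) in *. set (A := w * p + w * c0) in *.
  replace (J A) with (- J (- A)) by (rewrite J_odd; ring).
  assert (HT1 : 1 <= T) by (unfold T; lra).
  pose proof (J_bound B ltac:(lra)). pose proof (J_bound (- A) ltac:(lra)).
  pose proof (exp_sq_le B ltac:(lra)). pose proof (exp_sq_le (- A) ltac:(lra)).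
  assert (exp (- B) <= exp (- T)) by (apply exp_mono; lra).
  assert (exp (- - A) <= exp (- T)) by (apply exp_mono; lra).
  assert (Hv : sqrt PI / w = / w * (2 * cG)) by (unfold cG; field; lra).
  rewrite Hv.
  replace (/ w * (J B - - J (- A)) - / w * (2 * cG)) with (/ w * ((J B - cG) + (J (- A) - cG))) by ring.
  rewrite Rabs_mult. rewrite Rabs_pos_eq by (apply Rlt_le, Rinv_0_lt_compat; auto).
  assert (Hs : Rabs ((J B - cG) + (J (- A) - cG)) < eps * w).
  { eapply Rle_lt_trans. apply Rabs_triang.
    assert (cG * exp (- T) < cG * (eps * w / (2 * cG))) by (apply Rmult_lt_compat_l; auto).
    replace (cG * (eps * w / (2 * cG))) with (eps * w / 2) in * by (field; lra).
    assert (cG * exp (- B ^ 2) <= cG * exp (- T)) by (apply Rmult_le_compat_l; lra).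
    assert (cG * exp (- (- A) ^ 2) <= cG * exp (- T)) by (apply Rmult_le_compat_l; lra).
    lra. }
  apply Rmult_lt_compat_l with (r := / w) in Hs; [|apply Rinv_0_lt_compat; auto].
  replace (/ w * (eps * w)) with eps in Hs by (field; lra). exact Hs.
Qed.

Lemma tanh_abs y : Rabs (tanh y) <= 1.
Proof.
  unfold tanh, sinh, cosh. pose proof (exp_pos y). pose proof (exp_pos (- y)).
  replace ((exp y - exp (- y)) / 2 / ((exp y + exp (- y)) / 2)) with ((exp y - exp (- y)) * / (exp y + exp (- y))) by (field; lra).
  assert (Hi : (exp y + exp (- y)) * / (exp y + exp (- y)) = 1) by (field; lra).
  assert (0 < / (exp y + exp (- y))) by (apply Rinv_0_lt_compat; lra).
  apply Rabs_le. split; nra.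
Qed.

Lemma one_minus_tanh y : 1 - tanh y = exp (- y) * / cosh y.
Proof.
  unfold tanh, sinh, cosh. pose proof (exp_pos y). pose proof (exp_pos (- y)).
  assert (Hm : exp y * exp (- y) = 1) by (rewrite <- exp_plus; replace (y + - y) with 0 by ring; apply exp_0).
  field. lra.
Qed.

Lemma pdf_bound z : std_normal_pdf z <= exp (1/2) / sqrt (2 * PI) * exp (- Rabs z).
Proof.
  unfold std_normal_pdf.
  assert (0 < sqrt (2 * PI)) by (apply sqrt_lt_R0; pose proof PI_RGT_0; lra).
  replace (exp (1/2) / sqrt (2 * PI) * exp (- Rabs z)) with ((exp (1/2) * exp (- Rabs z)) * / sqrt (2 * PI)) by (field; lra).
  apply Rmult_le_compat_r. apply Rlt_le, Rinv_0_lt_compat; lra.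
  rewrite <- exp_plus. apply exp_mono.
  pose proof (pow2_ge_0 (z-1)). pose proof (pow2_ge_0 (z+1)).
  destruct (Rle_dec 0 z). rewrite Rabs_pos_eq by auto; lra. rewrite Rabs_left by lra; lra.
Qed.

Lemma sq_sqrt_pos s : 0 <= s -> sqrt s * sqrt s = s.
Proof. intros; apply sqrt_sqrt; auto. Qed.

Theorem mainTheorem19 :
  forall r : nat, (7 <= r)%nat ->
    exists x : R, 0 < x < 1 /\ g_r r x > x.
Proof.
  intros r Hr. exists (4/5). split; [lra|].
  pose proof (s_lb r Hr) as Hs.
  unfold g_r. set (s := s_r r (4/5)) in *.
  assert (Hs0 : 0 <= s) by lra.
  assert (HPI := PI_RGT_0).
  assert (Hsq2 : 0 < sqrt (2 * PI)) by (apply sqrt_lt_R0; lra).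
  set (f := fun z => tanh (s + sqrt s * z) * std_normal_pdf z).
  assert (Hfc : forall z, continuous f z).
  { intros z. apply cont_R. unfold f, std_normal_pdf, tanh, sinh, cosh. auto_derive.
    repeat split; try lra. pose proof (exp_pos (s + sqrt s * z)). pose proof (exp_pos (- (s + sqrt s * z))). lra. }
  destruct (Glim_exists f (exp (1/2) / sqrt (2 * PI)) Hfc) as [lf Hlf].
  { intros z. unfold f. rewrite Rabs_mult.
    pose proof (tanh_abs (s + sqrt s * z)). pose proof (pdf_bound z).
    assert (0 <= std_normal_pdf z).
    { unfold std_normal_pdf. apply Rmult_le_pos. apply Rlt_le, exp_pos. apply Rlt_le, Rinv_0_lt_compat; lra. }
    rewrite (Rabs_pos_eq (std_normal_pdf z)) by auto.
    pose proof (Rabs_pos (tanh (s + sqrt s * z))). nra. }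
  replace (RInt_gen f (Rbar_locally m_infty) (Rbar_locally p_infty)) with lf.
  2:{ symmetry. apply is_RInt_gen_unique; try (apply Proper_StrongProper, Rbar_locally_filter).
      apply Glim_is_RInt_gen; auto. }
  set (K := / sqrt (2 * PI)).
  set (a3 := (1 + 2 * (7/20) * s) / 2).
  assert (Ha3 : 0 < a3) by (unfold a3; lra).
  set (e := exp (- s / 2)).
  set (h1 := fun z => K * exp (- (1/2 * (z + 0)^2))).
  set (h2 := fun z => K * exp (- (1/2 * (z + sqrt s)^2))).
  set (h3 := fun z => K * exp (- (a3 * (z + sqrt s)^2))).
  set (h := fun z => h1 z + (- e) * (14/100 * h2 z + h3 z)).
  assert (Cg : forall a c z, continuous (fun z => K * exp (- (a * (z + c)^2))) z).
  { intros. apply cont_R. auto_derive. auto. }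
  assert (G1 : Glim h1 (K * (sqrt PI / sqrt (1/2)))) by (apply Glim_scal; [intros; apply cont_R; auto_derive; auto | apply gauss_Glim; lra]).
  assert (G2 : Glim h2 (K * (sqrt PI / sqrt (1/2)))) by (apply Glim_scal; [intros; apply cont_R; auto_derive; auto | apply gauss_Glim; lra]).
  assert (G3 : Glim h3 (K * (sqrt PI / sqrt a3))) by (apply Glim_scal; [intros; apply cont_R; auto_derive; auto | apply gauss_Glim; lra]).
  assert (Gh : Glim h (K * (sqrt PI / sqrt (1/2)) + (- e) * (14/100 * (K * (sqrt PI / sqrt (1/2))) + K * (sqrt PI / sqrt a3)))).
  { apply Glim_plus; [apply Cg| |apply G1|].
    - intros z. apply cont_R. unfold h2, h3. auto_derive. auto.
    - apply Glim_scal. intros z. apply cont_R. unfold h2, h3. auto_derive. auto.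
      apply Glim_plus; [|apply Cg| |apply G3].
      + intros z. apply cont_R. unfold h2. auto_derive. auto.
      + apply Glim_scal; [apply Cg|apply G2]. }
  assert (Hhc : forall z, continuous h z).
  { intros z. apply cont_R. unfold h, h1, h2, h3. auto_derive. auto. }
  assert (Hq : sqrt s * sqrt s = s) by (apply sqrt_sqrt; lra).
  assert (Hle : forall z, h z <= f z).
  { intros z. set (q := sqrt s) in *. set (y := s + q * z).
    set (P := exp (- z^2 / 2)). set (X := exp (- (7/20) * y^2)).
    assert (T1 : 1 - exp (- y) * (14/100 + X) <= tanh y).
    { pose proof (sech_bound y) as Hs'. fold X in Hs'. pose proof (one_minus_tanh y) as Ht.
      pose proof (exp_pos (- y)).
      assert (exp (- y) * / cosh y <= exp (- y) * (X + 14/100)) by (apply Rmult_le_compat_l; lra).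
      lra. }
    assert (E1 : e * exp (- (1/2 * (z + q)^2)) = P * exp (- y)).
    { unfold e, P. rewrite <- !exp_plus. f_equal. unfold y. rewrite <- Hq. field. }
    assert (E2 : exp (- (a3 * (z + q)^2)) = exp (- (1/2 * (z + q)^2)) * X).
    { unfold X. rewrite <- exp_plus. f_equal. unfold y, a3. rewrite <- Hq. field. }
    assert (E0 : exp (- (1/2 * (z + 0)^2)) = P).
    { unfold P. f_equal. field. }
    assert (Hh : h z = K * P * (1 - exp (- y) * (14/100 + X))).
    { unfold h, h1, h2, h3. fold q. rewrite E0, E2.
      replace (K * P + - e * (14 / 100 * (K * exp (- (1 / 2 * (z + q) ^ 2))) + K * (exp (- (1 / 2 * (z + q) ^ 2)) * X)))
        with (K * P - K * (e * exp (- (1 / 2 * (z + q) ^ 2))) * (14/100 + X)) by ring.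
      rewrite E1. ring. }
    assert (Hf : f z = K * P * tanh y).
    { unfold f, std_normal_pdf. fold q. fold y. unfold K, P. field. lra. }
    rewrite Hh, Hf. apply Rmult_le_compat_l; auto.
    apply Rmult_le_pos. unfold K. apply Rlt_le, Rinv_0_lt_compat; lra. apply Rlt_le, exp_pos. }
  pose proof (Glim_le f h lf _ Hfc Hhc Hle Hlf Gh) as HL.
  assert (V1 : K * (sqrt PI / sqrt (1/2)) = 1).
  { unfold K. rewrite sqrt_mult by lra.
    assert (H2 : sqrt (1/2) * sqrt 2 = 1) by (rewrite <- sqrt_mult by lra; replace (1/2*2) with 1 by field; apply sqrt_1).
    assert (0 < sqrt PI) by (apply sqrt_lt_R0; lra). assert (0 < sqrt 2) by (apply sqrt_lt_R0; lra).
    assert (0 < sqrt (1/2)) by (apply sqrt_lt_R0; lra).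
    field_simplify; try lra. rewrite Rmult_comm, H2. field. }
  assert (V3 : K * (sqrt PI / sqrt a3) = / sqrt (1 + 2 * (7/20) * s)).
  { unfold K. rewrite sqrt_mult by lra.
    assert (H2 : sqrt a3 * sqrt 2 = sqrt (1 + 2 * (7/20) * s)) by (rewrite <- sqrt_mult by lra; f_equal; unfold a3; field).
    assert (0 < sqrt PI) by (apply sqrt_lt_R0; lra). assert (0 < sqrt 2) by (apply sqrt_lt_R0; lra).
    assert (0 < sqrt a3) by (apply sqrt_lt_R0; lra).
    rewrite <- H2. field. repeat split; lra. }
  rewrite V1, V3 in HL.
  pose proof (final_num s Hs). unfold e in HL. rewrite Rmult_1_r in HL. lra.
Qed.
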